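(* Let $\mathbf{\Omega}\subset\mathbb{R}^n$ be a finite set, let $f:\mathbf{\Omega}\to\mathbb{R}$, and let $\lambda=\sum_{\mathbf{v}\in\mathbf{\Omega}}\delta_{\mathbf{v}}$ be the counting measure on $\mathbf{\Omega}$. Let $\underline{f}=\min_{\mathbf{\Omega}}f$, $\overline{f}=\max_{\mathbf{\Omega}}f$, $\mathcal{Z}=\{f(\mathbf{v}):\mathbf{v}\in\mathbf{\Omega}\}$ and $\bar r=\mathrm{card}(\mathcal{Z})-1$. Let $\#\lambda$ be the pushforward of $\lambda$ by $f$, with moments $\#\lambda_k=\sum_{\mathbf{v}\in\mathbf{\Omega}}f(\mathbf{v})^k$, and for $r\in\mathbb{N}$ let $\mathbf{H}_r(\#\lambda)$ and $\mathbf{H}_r(x;\#\lambda)$ be the $(r+1)\times(r+1)$ Hankel matrices with $(i,j)$ entries $\#\lambda_{i+j}$ and $\#\lambda_{i+j+1}$ respectively ($i,j=0,\dots,r$), and \[\tau^\ell_r=\sup_a\{a:\ \mathbf{H}_r(x;\#\lambda)\succeq a\,\mathbf{H}_r(\#\lambda)\},\qquad \tau^u_r=\inf_a\{a:\ a\,\mathbf{H}_r(\#\lambda)\succeq \mathbf{H}_r(x;\#\lambda)\}.\] Then $\tau^\ell_{\bar r}=\underline{f}$ and $\tau^u_{\bar r}=\overline{f}$.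
   Context: $\delta_{\mathbf{v}}$ is the Dirac measure at $\mathbf{v}$. The pushforward is $\#\lambda(C)=\lambda(f^{-1}(C))$. $\mathbf{A}\succeq\mathbf{B}$ means $\mathbf{A}-\mathbf{B}$ is positive semidefinite. *)

(* Defs.v *)
From HB Require Import structures.
From mathcomp Require Import all_boot all_order all_algebra.
From mathcomp Require Import boolp classical_sets reals.
Set Implicit Arguments. Unset Strict Implicit. Unset Printing Implicit Defensive.
Import Order.TTheory GRing.Theory Num.Theory.
Local Open Scope ring_scope.

Section Defs.
Variables (R : realType) (n : nat).
Implicit Types (Omega : seq 'rV[R]_n) (f : 'rV[R]_n -> R).

Definition pmoment Omega f (k : nat) : R := \sum_(v <- Omega) f v ^+ k.

Definition hankel Omega f (r : nat) : 'M[R]_(r.+1) :=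
  \matrix_(i < r.+1, j < r.+1) pmoment Omega f (i + j)%N.

Definition hankel_x Omega f (r : nat) : 'M[R]_(r.+1) :=
  \matrix_(i < r.+1, j < r.+1) pmoment Omega f (i + j).+1.

End Defs.

Definition psd (R : realType) (m : nat) (A : 'M[R]_m) : Prop :=
  forall x : 'cV[R]_m, 0 <= ((x^T *m A *m x) 0 0).

Definition tau_l (R : realType) (n : nat) (Omega : seq 'rV[R]_n)
  (f : 'rV[R]_n -> R) (r : nat) : R :=
  sup [set a : R | psd (hankel_x Omega f r - a *: hankel Omega f r)]%classic.

Definition tau_u (R : realType) (n : nat) (Omega : seq 'rV[R]_n)
  (f : 'rV[R]_n -> R) (r : nat) : R :=
  inf [set a : R | psd (a *: hankel Omega f r - hankel_x Omega f r)]%classic.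

Definition rbar (R : realType) (n : nat) (Omega : seq 'rV[R]_n)
  (f : 'rV[R]_n -> R) : nat := (size (undup (map f Omega))).-1.

Definition fmin (R : realType) (n : nat) (Omega : seq 'rV[R]_n)
  (f : 'rV[R]_n -> R) : R :=
  \big[Num.min/f (head 0 Omega)]_(v <- Omega) f v.
Definition fmax (R : realType) (n : nat) (Omega : seq 'rV[R]_n)
  (f : 'rV[R]_n -> R) : R :=
  \big[Num.max/f (head 0 Omega)]_(v <- Omega) f v.

(* Main.v *)
Require Import Defs.
From HB Require Import structures.
From mathcomp Require Import all_boot all_order all_algebra.
From mathcomp Require Import ring zify.
From mathcomp Require Import boolp classical_sets reals.
Import Order.TTheory GRing.Theory Num.Theory.
Local Open Scope ring_scope.

Section S.
Variables (R : realType) (n : nat) (Omega : seq 'rV[R]_n) (f : 'rV[R]_n -> R).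

Definition Mg (g : R -> R) r : 'M[R]_r.+1 :=
  \matrix_(i < r.+1, j < r.+1) \sum_(v <- Omega) g (f v) * f v ^+ (i + j)%N.

Lemma quadE g r (x : 'cV[R]_r.+1) :
  (x^T *m Mg g r *m x) 0 0 =
  \sum_(v <- Omega) g (f v) * (\sum_(i < r.+1) x i 0 * f v ^+ i) ^+ 2.
Proof.
rewrite mxE.
under eq_bigr => j _ do rewrite mxE big_distrl /=.
under eq_bigr => j _ do under eq_bigr => i _ do rewrite !mxE big_distrr big_distrl /=.
under [RHS]eq_bigr => v _ do rewrite expr2 big_distrl big_distrr /=.
under [RHS]eq_bigr => v _ do under eq_bigr => i _ do rewrite big_distrr big_distrr /=.
under eq_bigr => j _ do rewrite exchange_big /=.
rewrite exchange_big /=.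
apply: eq_bigr => v _.
apply: eq_bigr => i _; apply: eq_bigr => j _.
rewrite exprD; ring.
Qed.

Lemma sum_if (P : pred 'rV[R]_n) (c : R) (s : seq 'rV[R]_n) :
  \sum_(v <- s) (if P v then c else 0) = c *+ count P s.
Proof.
elim: s => [|a s IH]; rewrite ?big_nil ?big_cons ?IH //=.
by case: (P a); rewrite ?mulrS ?add0r.
Qed.

Lemma psdP g : psd (Mg g (rbar Omega f)) <-> forall v, v \in Omega -> 0 <= g (f v).
Proof.
split; last first.
  move=> H x; rewrite quadE big_seq; apply: sumr_ge0 => v vO.
  by apply: mulr_ge0; [exact: H | exact: sqr_ge0].
move=> H v0 v0O.
set Z := undup (map f Omega).
set z := f v0.
have zZ : z \in Z by rewrite mem_undup; apply: map_f.
set p := \prod_(w <- Z | w != z) ('X - w%:P).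
have pE : p = \prod_(w <- [seq w <- Z | w != z]) ('X - w%:P) by rewrite big_filter.
have sp : (size p <= (rbar Omega f).+1)%N.
  rewrite pE size_prod_XsubC size_filter /rbar -/Z.
  have := count_predC (fun w => w != z) Z.
  have : (0 < count (predC (fun w => w != z)) Z)%N.
    by rewrite -has_count; apply/hasP; exists z => //=; rewrite negbK.
  lia.
have rootp t : (p.[t] == 0) = (t \in [seq w <- Z | w != z]).
  by rewrite pE -/(root _ t) root_prod_XsubC.
have := H (\col_(i < (rbar Omega f).+1) p`_i).
rewrite quadE.
under eq_bigr => v _.
  rewrite (_ : \sum_(i < _) _ = p.[f v]); last first.
    by rewrite (horner_coef_wide _ sp); apply: eq_bigr => i _; rewrite mxE.
  over.
rewrite big_seq.
under eq_bigr => v vO.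
  rewrite (_ : _ * _ = if f v == z then g z * p.[z] ^+ 2 else 0); last first.
    case: eqP => [->//|/eqP fvz].
    have : p.[f v] == 0 by rewrite rootp mem_filter fvz mem_undup map_f.
    by move/eqP->; rewrite expr0n mulr0.
  over.
rewrite -big_seq sum_if pmulrn_lge0; last by rewrite -has_count; apply/hasP; exists v0.
rewrite pmulr_lge0 // lt_def sqr_ge0 andbT expf_neq0 //.
by rewrite rootp mem_filter eqxx.
Qed.


Lemma HxE a r : hankel_x Omega f r - a *: hankel Omega f r = Mg (fun t => t - a) r.
Proof.
apply/matrixP => i j; rewrite !mxE /pmoment mulr_sumr -sumrB.
by apply: eq_bigr => v _; rewrite exprS; ring.
Qed.

Lemma HuE a r : a *: hankel Omega f r - hankel_x Omega f r = Mg (fun t => a - t) r.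
Proof.
apply/matrixP => i j; rewrite !mxE /pmoment mulr_sumr -sumrB.
by apply: eq_bigr => v _; rewrite exprS; ring.
Qed.

Lemma bigmin_props (s : seq 'rV[R]_n) x0 :
  let B := \big[Num.min/x0]_(v <- s) f v in
  (forall v, v \in s -> B <= f v) /\ (B = x0 \/ exists2 v, v \in s & B = f v).
Proof.
elim: s => [|a s [IH1 IH2]] /=; first by rewrite big_nil; split => //; left.
rewrite big_cons; split.
  move=> v; rewrite inE => /orP[/eqP->|vs]; first by rewrite ge_min lexx.
  by rewrite ge_min IH1 ?orbT.
have [h|h] := leP (f a) (\big[Num.min/x0]_(v <- s) f v).
    by right; exists a => //; rewrite mem_head.
 case: IH2 => [->|[v vs ->]]; first by left.
by right; exists v => //; rewrite inE vs orbT.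
Qed.

Lemma bigmax_props (s : seq 'rV[R]_n) x0 :
  let B := \big[Num.max/x0]_(v <- s) f v in
  (forall v, v \in s -> f v <= B) /\ (B = x0 \/ exists2 v, v \in s & B = f v).
Proof.
elim: s => [|a s [IH1 IH2]] /=; first by rewrite big_nil; split => //; left.
rewrite big_cons; split.
  move=> v; rewrite inE => /orP[/eqP->|vs]; first by rewrite le_max lexx.
  by rewrite le_max IH1 ?orbT.
have [h|h] := leP (\big[Num.max/x0]_(v <- s) f v) (f a).
    by right; exists a => //; rewrite mem_head.
 case: IH2 => [->|[v vs ->]]; first by left.
by right; exists v => //; rewrite inE vs orbT.
Qed.

End S.

Theorem lemma2p4 (R : realType) (n : nat) (Omega : seq 'rV[R]_n)
  (f : 'rV[R]_n -> R) :
  uniq Omega -> Omega != [::] ->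
  tau_l Omega f (rbar Omega f) = fmin Omega f /\
  tau_u Omega f (rbar Omega f) = fmax Omega f.
Proof.
move=> _ Hne.
have hO : head 0 Omega \in Omega by case: Omega Hne => // a s _; rewrite mem_head.
have [m1 [w1 m2 m3]] : [/\ forall v, v \in Omega -> fmin Omega f <= f v &
    exists2 v, v \in Omega & fmin Omega f = f v].
  rewrite /fmin; have [H1 H2] := @bigmin_props R n f Omega (f (head 0 Omega)).
  by split => //; case: H2 => [->|//]; exists (head 0 Omega).
have [M1 [W1 M2 M3]] : [/\ forall v, v \in Omega -> f v <= fmax Omega f &
    exists2 v, v \in Omega & fmax Omega f = f v].
  rewrite /fmax; have [H1 H2] := @bigmax_props R n f Omega (f (head 0 Omega)).
  by split => //; case: H2 => [->|//]; exists (head 0 Omega).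
split.
  rewrite /tau_l.
  set E := (X in sup X).
  have EP a : E a <-> a <= fmin Omega f.
    rewrite /E /= HxE psdP; split.
      by move=> H; rewrite m3; have := H _ m2; rewrite subr_ge0.
    by move=> h v vO; rewrite subr_ge0 (le_trans h) ?m1.
  have Em : E (fmin Omega f) by apply/EP.
  apply/eqP; rewrite eq_le; apply/andP; split.
    by apply: ge_sup; [exists (fmin Omega f) | move=> a /EP].
  by apply: ub_le_sup => //; exists (fmin Omega f) => a /EP.
rewrite /tau_u.
set E := (X in inf X).
have EP a : E a <-> fmax Omega f <= a.
  rewrite /E /= HuE psdP; split.
    by move=> H; rewrite M3; have := H _ M2; rewrite subr_ge0.
  by move=> h v vO; rewrite subr_ge0 (le_trans _ h) ?M1.
have Em : E (fmax Omega f) by apply/EP.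
apply/eqP; rewrite eq_le; apply/andP; split.
  by apply: ge_inf => //; exists (fmax Omega f) => a /EP.
by apply: lb_le_inf; [exists (fmax Omega f) | move=> a /EP].
Qed.
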